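(* Let $p$ be a prime, $a\in\mathbb{Q}_p$, $a\ne0$, with $\sqrt{-a}\in\mathbb{Q}_p$, $A=|a|_p$, and $f(x)=\frac{ax}{x^2+a}$ on $\mathbb{Q}_p$. Let $0<r<\sqrt A$, $\rho(r)=r^3/A$, and $c\in\mathbb{Q}_p$ with $|c|_p=r$. Then: 1. $|f^{n+1}(c)-f^n(c)|_p=\rho(r)$ for every $n\ge1$. 2. $f(V_{\rho(r)}(c))=V_{\rho(r)}(c)$. 3. If for some $\theta>0$ the ball $V_\theta(c)\subset S_r(0)$ is invariant under $f$ (i.e. $f(V_\theta(c))\subseteq V_\theta(c)$), then $\theta\ge\rho(r)$.
   Context: $V_\theta(c)=\{x\in\mathbb{Q}_p:|x-c|_p\le\theta\}$, $S_r(0)=\{x\in\mathbb{Q}_p:|x|_p=r\}$; $f^n$ is the $n$-th iterate of $f$. *)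

(* Defs.v *)
From Stdlib Require Import Reals ZArith.
From HB Require Import structures.
From mathcomp Require Import all_boot all_order all_algebra.
Set Implicit Arguments. Unset Strict Implicit. Unset Printing Implicit Defensive.
Import GRing.Theory.

Definition rat_pval (p : nat) (q : rat) : Z :=
  Z.sub (Z.of_nat (logn p `|numq q|%N)) (Z.of_nat (logn p `|denq q|%N)).

Definition padic_abs_rat (p : nat) (q : rat) : R :=
  if q == 0%R then R0 else powerRZ (INR p) (Z.opp (rat_pval p q)).

(* (K, nrm) is "the" field Q_p of p-adic numbers with its absolute value
   |.|_p, characterised as the completion of Q w.r.t. |.|_p: a field with a
   non-archimedean absolute value restricting to |.|_p on Q, complete, and in
   which Q is dense.  These properties determine (K, nrm) up to unique
   isometric isomorphism. *)
Definition is_Qp (p : nat) (K : fieldType) (nrm : K -> R) : Prop :=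
    (forall x : K, nrm x = R0 <-> x = 0%R) /\
      (forall x y : K, nrm (x * y)%R = Rmult (nrm x) (nrm y)) /\
      (forall x y : K, Rle (nrm (x + y)%R) (Rmax (nrm x) (nrm y))) /\
      (forall q : rat, nrm (ratr q) = padic_abs_rat p q) /\
      (forall u : nat -> K,
          (forall eps : R, Rlt R0 eps -> exists N : nat, forall m n : nat,
             (N <= m)%N -> (N <= n)%N -> Rlt (nrm (u m - u n)%R) eps) ->
          exists l : K, (forall eps : R, Rlt R0 eps -> exists N : nat,
             forall n : nat, (N <= n)%N -> Rlt (nrm (u n - l)%R) eps)) /\
      (forall (x : K) (eps : R), Rlt R0 eps ->
          exists q : rat, Rlt (nrm (x - ratr q)%R) eps).

Definition fmap (K : fieldType) (a : K) (x : K) : K :=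
  (a * x / (x ^+ 2 + a))%R.

Definition fiter (K : fieldType) (a : K) (n : nat) (c : K) : K :=
  iter n (fmap a) c.

Definition ball (K : fieldType) (nrm : K -> R) (theta : R) (c : K) : K -> Prop :=
  fun x => Rle (nrm (x - c)%R) theta.

Definition sphere0 (K : fieldType) (nrm : K -> R) (r : R) : K -> Prop :=
  fun x => nrm x = r.

Definition has_sqrt_neg (K : fieldType) (a : K) : Prop :=
  exists s : K, (s * s)%R = (- a)%R.

Definition is_nonzero (K : fieldType) (a : K) : Prop := a <> 0%R.
Arguments is_Qp p K nrm : clear implicits.

(* Main.v *)
Require Import Defs.
From Stdlib Require Import Reals Lra.
From mathcomp Require Import all_boot all_order all_algebra.
From mathcomp Require ring.
Import GRing.Theory.
Set Implicit Arguments. Unset Strict Implicit.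
Open Scope R_scope.

Lemma R_e1 r A : A <> 0 -> r ^ 3 / A = r * (r * r / A).
Proof. intros; simpl; field; auto. Qed.
Lemma R_e2 d B A : d * B * / (A * A) = d * (B / (A * A)).
Proof. unfold Rdiv; ring. Qed.
Lemma R_e3 r A : A <> 0 -> r * r / A = (A * (r * r)) / (A * A).
Proof. intros; field; auto. Qed.

Import mathcomp.algebra_tactics.ring.

Definition NA (K : fieldType) (nrm : K -> R) : Prop :=
  (forall x : K, nrm x = 0 <-> x = 0%R) /\
  (forall x y : K, nrm (x * y)%R = nrm x * nrm y) /\
  (forall x y : K, nrm (x + y)%R <= Rmax (nrm x) (nrm y)) /\
  nrm (-1)%R = 1.

Lemma nrm0 K nrm (H : @NA K nrm) : nrm 0%R = 0.
Proof. case: H => h0 _; by apply h0. Qed.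
Lemma nrm_eq0 K nrm (H : @NA K nrm) x : nrm x = 0 -> x = 0%R.
Proof. case: H => h0 _; by apply h0. Qed.
Lemma nrmM K nrm (H : @NA K nrm) x y : nrm (x * y)%R = nrm x * nrm y.
Proof. by case: H => _ [h _]. Qed.
Lemma nrm_ult K nrm (H : @NA K nrm) x y : nrm (x + y)%R <= Rmax (nrm x) (nrm y).
Proof. by case: H => _ [_ [h _]]. Qed.
Lemma nrmN1 K nrm (H : @NA K nrm) : nrm (-1)%R = 1.
Proof. by case: H => _ [_ [_ h]]. Qed.
Lemma nrmN K nrm (H : @NA K nrm) x : nrm (- x)%R = nrm x.
Proof. have -> : (- x = -1 * x)%R by rewrite mulN1r. rewrite (nrmM H) (nrmN1 H); lra. Qed.
Lemma nrm_ge0 K nrm (H : @NA K nrm) x : 0 <= nrm x.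
Proof.
have := nrm_ult H x (- x)%R. rewrite addrN (nrm0 H) (nrmN H).
unfold Rmax; destruct Rle_dec; lra.
Qed.
Lemma nrm_sym K nrm (H : @NA K nrm) x y : nrm (x - y)%R = nrm (y - x)%R.
Proof. by rewrite -(nrmN H) opprB. Qed.
Lemma nrm1 K nrm (H : @NA K nrm) : nrm 1%R = 1.
Proof.
have -> : (1 = -1 * -1 :> K)%R by rewrite mulN1r opprK.
rewrite (nrmM H) (nrmN1 H); lra.
Qed.
Lemma nrmV K nrm (H : @NA K nrm) x : x != 0%R -> nrm (x^-1)%R = / nrm x.
Proof.
move=> hx. have h := nrmM H x (x^-1)%R. rewrite mulfV // (nrm1 H) in h.
have hn : nrm x <> 0 by move=> /(nrm_eq0 H) e; rewrite e eqxx in hx.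
apply (Rmult_eq_reg_l (nrm x)) => //. rewrite -h Rinv_r //.
Qed.
Lemma nrmX K nrm (H : @NA K nrm) x n : nrm (x ^+ n)%R = nrm x ^ n.
Proof.
elim: n => [|n IH]; first by rewrite expr0 (nrm1 H).
by rewrite exprS (nrmM H) IH.
Qed.
Lemma ult_le K nrm (H : @NA K nrm) x y b : nrm x <= b -> nrm y <= b -> nrm (x + y)%R <= b.
Proof. have := nrm_ult H x y. unfold Rmax; destruct Rle_dec; lra. Qed.
Lemma ult_lt K nrm (H : @NA K nrm) x y b : nrm x < b -> nrm y < b -> nrm (x + y)%R < b.
Proof. have := nrm_ult H x y. unfold Rmax; destruct Rle_dec; lra. Qed.
Lemma nrm_strict K nrm (H : @NA K nrm) x y : nrm x < nrm y -> nrm (x + y)%R = nrm y.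
Proof.
move=> hxy. have h1 := nrm_ult H x y. have h2 := nrm_ult H (x + y)%R (- x)%R.
have e : ((x + y) + - x = y)%R by rewrite addrC addKr.
rewrite e (nrmN H) in h2.
revert h1 h2; unfold Rmax; do 2 destruct Rle_dec; lra.
Qed.

Definition hh (K : fieldType) (a x : K) : K := (x ^+ 3 / (x ^+ 2 + a))%R.

Lemma den_nrm K nrm (H : @NA K nrm) (a : K) r x :
  0 < r -> r * r < nrm a -> nrm x = r -> nrm (x ^+ 2 + a)%R = nrm a.
Proof.
move=> hr hra hx. apply: (nrm_strict H). rewrite (nrmX H) hx /=. lra.
Qed.

Lemma den_neq0 K nrm (H : @NA K nrm) (a : K) r x :
  0 < r -> r * r < nrm a -> nrm x = r -> (x ^+ 2 + a)%R != 0%R.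
Proof.
move=> hr hra hx. apply/eqP => e. have := den_nrm H hr hra hx.
rewrite e (nrm0 H). nra.
Qed.

Lemma fmap_hh (K : fieldType) (a x : K) : (x ^+ 2 + a)%R != 0%R ->
  fmap a x = (x - hh a x)%R.
Proof. move=> h. rewrite /fmap /hh. field. exact: h. Qed.

Lemma hh_nrm K nrm (H : @NA K nrm) (a : K) r x :
  0 < r -> r * r < nrm a -> nrm x = r -> nrm (hh a x) = r ^ 3 / nrm a.
Proof.
move=> hr hra hx. rewrite /hh (nrmM H) (nrmV H (den_neq0 H hr hra hx)).
by rewrite (den_nrm H hr hra hx) (nrmX H) hx.
Qed.

Lemma rho_lt K nrm (H : @NA K nrm) (a : K) r :
  0 < r -> r * r < nrm a -> 0 < r ^ 3 / nrm a < r.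
Proof.
move=> hr hra. have hA : 0 < nrm a by nra.
have e := R_e1 r (Rgt_not_eq _ _ hA).
have h1 : r * r / nrm a < 1.
  apply (Rmult_lt_reg_r (nrm a)) => //. unfold Rdiv. rewrite Rmult_assoc Rinv_l; lra.
have h2 : 0 < r * r / nrm a by apply Rdiv_lt_0_compat; nra.
rewrite e. split; nra.
Qed.

Lemma hh_lip K nrm (H : @NA K nrm) (a : K) r x x' :
  0 < r -> r * r < nrm a -> nrm x = r -> nrm x' = r ->
  nrm (hh a x - hh a x')%R <= (r * r / nrm a) * nrm (x - x')%R.
Proof.
move=> hr hra hx hx'. have hA : 0 < nrm a by nra.
have d1 := den_neq0 H hr hra hx. have d2 := den_neq0 H hr hra hx'.
have e : (hh a x - hh a x' = (x - x') * (x ^+ 2 * x' ^+ 2 + a * (x ^+ 2 + x * x' + x' ^+ 2))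
    / ((x ^+ 2 + a) * (x' ^+ 2 + a)))%R.
  rewrite /hh. field. by rewrite d1 d2.
rewrite e (nrmM H) (nrmM H) (nrmV H); last by rewrite mulf_neq0.
rewrite (nrmM H) (den_nrm H hr hra hx) (den_nrm H hr hra hx').
set B := (x ^+ 2 * x' ^+ 2 + a * (x ^+ 2 + x * x' + x' ^+ 2))%R.
have hB : nrm B <= nrm a * (r * r).
  apply: (ult_le H).
    rewrite (nrmM H) !(nrmX H) hx hx' /=. nra.
  rewrite (nrmM H). apply Rmult_le_compat_l; first lra.
  apply: (ult_le H); [apply: (ult_le H)|];
    rewrite ?(nrmM H) ?(nrmX H) ?hx ?hx' /=; lra.
have hd := nrm_ge0 H (x - x')%R. have hB0 := nrm_ge0 H B.
have e2 : nrm (x - x')%R * nrm B * / (nrm a * nrm a)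
   = nrm (x - x')%R * (nrm B / (nrm a * nrm a)) by apply R_e2.
rewrite e2 (Rmult_comm (r * r / nrm a)). apply Rmult_le_compat_l => //.
have e3 := R_e3 r (Rgt_not_eq _ _ hA).
rewrite e3. unfold Rdiv. apply Rmult_le_compat_r => //.
left. apply Rinv_0_lt_compat. nra.
Qed.

Lemma ball_sph K nrm (H : @NA K nrm) (a c x : K) r :
  0 < r -> r * r < nrm a -> nrm c = r -> nrm (x - c)%R <= r ^ 3 / nrm a -> nrm x = r.
Proof.
move=> hr hra hc hx. have [h1 h2] := rho_lt H hr hra.
have e : (x = (x - c) + c)%R by rewrite subrK.
rewrite e (nrm_strict H) //. lra.
Qed.

Lemma fmap_ball K nrm (H : @NA K nrm) (a c x : K) r :
  0 < r -> r * r < nrm a -> nrm c = r -> nrm (x - c)%R <= r ^ 3 / nrm a ->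
  nrm (fmap a x - c)%R <= r ^ 3 / nrm a.
Proof.
move=> hr hra hc hx. have hx' := ball_sph H hr hra hc hx.
rewrite (fmap_hh (den_neq0 H hr hra hx')).
have e : (x - hh a x - c = - hh a x + (x - c))%R by ring.
rewrite e. apply: (ult_le H) => //. rewrite (nrmN H) (hh_nrm H hr hra hx'). lra.
Qed.

Lemma powk_le1 k d : 0 <= k <= 1 -> k ^ d <= 1.
Proof. move=> hk. elim: d => [|d IH] /=; nra. Qed.

Lemma surj K nrm (H : @NA K nrm)
  (Hc : forall u : nat -> K,
          (forall eps : R, Rlt R0 eps -> exists N : nat, forall m n : nat,
             (N <= m)%N -> (N <= n)%N -> Rlt (nrm (u m - u n)%R) eps) ->
          exists l : K, (forall eps : R, Rlt R0 eps -> exists N : nat,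
             forall n : nat, (N <= n)%N -> Rlt (nrm (u n - l)%R) eps))
  (a c y : K) r :
  0 < r -> r * r < nrm a -> nrm c = r -> nrm (y - c)%R <= r ^ 3 / nrm a ->
  exists x, nrm (x - c)%R <= r ^ 3 / nrm a /\ fmap a x = y.
Proof.
move=> hr hra hc hy.
set rho := r ^ 3 / nrm a. have [hrho0 hrhor] : 0 < rho < r := rho_lt H hr hra.
have hA : 0 < nrm a by nra.
set k := r * r / nrm a.
have hk0 : 0 <= k by left; apply Rdiv_lt_0_compat; nra.
have hk1 : k < 1.
  apply (Rmult_lt_reg_r (nrm a)) => //. rewrite /k. unfold Rdiv. rewrite Rmult_assoc Rinv_l; lra.
pose g x := (y + hh a x)%R.
have sph x : nrm (x - c)%R <= rho -> nrm x = r by apply: ball_sph.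
have gball x : nrm (x - c)%R <= rho -> nrm (g x - c)%R <= rho.
  move=> hx. have e : (g x - c = (y - c) + hh a x)%R by rewrite /g; ring.
  rewrite e. apply: (ult_le H) => //. rewrite (hh_nrm H hr hra (sph x hx)) -/rho. lra.
pose u n := iter n g y.
have uball n : nrm (u n - c)%R <= rho.
  elim: n => [|n IH] //=. exact: gball.
have ustep n : nrm (u n.+1 - u n)%R <= k ^ n * rho.
  elim: n => [|n IH].
    have e : (u 1%N - u 0%N = hh a y)%R by rewrite /u /= /g; ring.
    rewrite e (hh_nrm H hr hra (sph y hy)) -/rho /=. lra.
  have e : (u n.+2 - u n.+1 = hh a (u n.+1) - hh a (u n))%R.
    by rewrite /u [iter n.+2 _ _]/= [iter n.+1 _ _]/= /g; ring.
  rewrite e. apply: Rle_trans; first apply: (hh_lip H hr hra (sph _ (uball _)) (sph _ (uball _))).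
  rewrite -/k /= Rmult_assoc. apply Rmult_le_compat_l => //.
have ucau n d : nrm (u (n + d)%N - u n)%R <= k ^ n * rho.
  elim: d => [|d IH].
    rewrite addn0 addrN (nrm0 H). have := pow_le k n hk0. nra.
  have e : (u (n + d.+1)%N - u n = (u (n + d).+1 - u (n + d)%N) + (u (n + d)%N - u n))%R.
    by rewrite addnS; ring.
  rewrite e. apply: (ult_le H) => //. apply: Rle_trans; first exact: ustep.
  have e2 : k ^ (n + d)%N = k ^ n * k ^ d by rewrite pow_add.
  rewrite e2 Rmult_assoc. apply Rmult_le_compat_l; first exact: pow_le.
  have := powk_le1 d (conj hk0 (Rlt_le _ _ hk1)). nra.
have [l hl] : exists l : K, (forall eps : R, Rlt R0 eps -> exists N : nat,
             forall n : nat, (N <= n)%N -> Rlt (nrm (u n - l)%R) eps).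
  apply: Hc => eps heps.
  have hk' : Rabs k < 1 by rewrite Rabs_right; lra.
  have he : 0 < eps / rho by apply Rdiv_lt_0_compat.
  have [N hN] := pow_lt_1_zero k hk' (eps / rho) he.
  have hN' n : (N <= n)%N -> k ^ n * rho < eps.
    move=> /leP hn. have := hN n hn. rewrite Rabs_right; last by apply Rle_ge, pow_le.
    move=> h. apply (Rmult_lt_reg_r (/ rho)); first by apply Rinv_0_lt_compat.
    rewrite Rmult_assoc Rinv_r; lra.
  exists N => m n hm hn. case: (leqP m n) => hmn.
    rewrite (nrm_sym H) -(subnKC hmn). apply: Rle_lt_trans; first exact: ucau. exact: hN'.
  rewrite -(subnKC (ltnW hmn)). apply: Rle_lt_trans; first exact: ucau. exact: hN'.
have lball : nrm (l - c)%R <= rho.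
  case: (Rle_lt_dec (nrm (l - c)%R) rho) => // hlt.
  have [N hN] := hl (nrm (l - c)%R - rho) ltac:(lra).
  have hN1 := hN N (leqnn N).
  have e : (l - c = - (u N - l) + (u N - c))%R by ring.
  have : nrm (l - c)%R < nrm (l - c)%R.
    rewrite {1}e. apply: (ult_lt H). rewrite (nrmN H); lra. have := uball N; lra.
  lra.
have hfix : g l = l.
  apply/eqP; rewrite -subr_eq0; apply/eqP; apply: (nrm_eq0 H).
  have := nrm_ge0 H (g l - l)%R. case => // hpos. exfalso.
  have [N hN] := hl _ hpos.
  have e : (g l - l = (hh a l - hh a (u N)) + (u N.+1 - l))%R by rewrite /u /= /g; ring.
  have : nrm (g l - l)%R < nrm (g l - l)%R.
    rewrite {1}e. apply: (ult_lt H); last by apply: hN; apply: leqW.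
    apply: Rle_lt_trans; first apply: (hh_lip H hr hra (sph _ lball) (sph _ (uball _))).
    rewrite -/k (nrm_sym H l). have := hN N (leqnn N). have := nrm_ge0 H (u N - l)%R. move=> h0 h1.
    apply: Rle_lt_trans h1. have := Rmult_le_compat_r _ _ _ h0 (Rlt_le _ _ hk1). by rewrite Rmult_1_l.
  by move=> /Rlt_irrefl.
exists l; split => //.
rewrite (fmap_hh (den_neq0 H hr hra (sph _ lball))).
by rewrite -{1}hfix /g addrK.
Qed.

Lemma pabs_m1 p : padic_abs_rat p (-1)%R = 1.
Proof.
rewrite /padic_abs_rat /rat_pval.
have -> : ((-1 : rat) == 0)%R = false by [].
have -> : numq (-1 : rat) = (-1)%R by [].
have -> : denq (-1 : rat) = 1%R by [].
by rewrite /= logn1.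
Qed.

Theorem theorem3p4 (p : nat) (K : fieldType) (nrm : K -> R)
  (hp : prime p) (hK : is_Qp p K nrm)
  (a : K) (ha : is_nonzero a) (hsq : has_sqrt_neg a)
  (r : R) (hr0 : Rlt R0 r) (hr : Rlt r (sqrt (nrm a)))
  (c : K) (hc : nrm c = r) :
  let A := nrm a in
  let rho := Rdiv (pow r 3) A in
  let f := fmap a in
  [/\ (* 1 *) (forall n : nat, (1 <= n)%N ->
          nrm (fiter a n.+1 c - fiter a n c)%R = rho),
      (* 2: f(V_rho(c)) = V_rho(c) *)
      (forall x : K, ball nrm rho c x -> ball nrm rho c (f x)) /\
      (forall y : K, ball nrm rho c y -> exists x : K, ball nrm rho c x /\ f x = y) &
      (* 3 *)
      (forall theta : R, Rlt R0 theta ->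
          (forall x : K, ball nrm theta c x -> sphere0 nrm r x) ->
          (forall x : K, ball nrm theta c x -> ball nrm theta c (f x)) ->
          Rle rho theta)].
Proof.
case: hK => h0 [hM [hU [hQ [hC _]]]].
have H : NA nrm.
  split => //; split => //; split => //.
  have e : (@ratr K (-1) = -1)%R.
    have := @ratr_int K (-1). rewrite [in RHS]intrN /=. by move=> <-.
  by rewrite -e hQ pabs_m1.
move=> A rho f.
have hA0 : 0 <= nrm a by apply: (nrm_ge0 H).
have hra : r * r < nrm a.
  have := sqrt_sqrt _ hA0. have := sqrt_pos (nrm a). nra.
have fstep x : nrm x = r -> nrm (fmap a x - x)%R = rho.
  move=> hx. rewrite (fmap_hh (den_neq0 H hr0 hra hx)).
  have e : (x - hh a x - x = - hh a x)%R by ring.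
  by rewrite e (nrmN H) (hh_nrm H hr0 hra hx).
have iter_sph n : nrm (fiter a n c) = r.
  elim: n => [|n IH] //=. rewrite /fiter /=.
  have [h1 h2] := rho_lt H hr0 hra.
  have e : (fmap a (iter n (fmap a) c) = (fmap a (iter n (fmap a) c) - iter n (fmap a) c) + iter n (fmap a) c)%R
    by rewrite subrK.
  rewrite e (nrm_strict H) //. rewrite -/(fiter a n c) fstep //. rewrite IH. exact: h2.
split.
- move=> n _. rewrite /fiter /=. apply: fstep. exact: iter_sph.
- split.
  + move=> x hx. exact: (fmap_ball H hr0 hra hc hx).
  + move=> y hy. exact: (surj H hC hr0 hra hc hy).
- move=> theta ht hsph hinv.
  have hcb : ball nrm theta c c by rewrite /ball addrN (nrm0 H); lra.
  have := hinv c hcb. rewrite /ball /f fstep //.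
Qed.
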